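(* There exists a constant $M>0$ such that for all $t\ge s\ge0$, \[ |K_1(t,s)|\le M\,E(t,s)\quad\text{and}\quad |K_2(t,s)|\le M\,E(t,s), \] where $K_1(t,s)=\omega^2R(t,s)-\partial_sR(t,s)$ and $K_2(t,s)=\omega^2\partial_tR(t,s)-\partial_t\partial_sR(t,s)$.
   Context: Standing assumptions: $\omega>0$ is a constant; $p\in C^1([0,\infty))$ with $p(t)>0$ and $p'(t)<0$ for all $t\ge0$, $\int_0^\infty p(t)\,dt=\infty$ and $\int_0^\infty p(t)^2\,dt<\infty$. Notation: $E(t,s)=\exp(-\frac12\int_s^tp(\tau)\,d\tau)$ for $0\le s\le t$; $q(t)=-\frac14p(t)^2-\frac12p'(t)$. For each $s\ge0$, $t\mapsto G_u(t,s)$ ($t\ge s$) is the solution of $\partial_t^2G_u+(\omega^2+q(t))G_u=0$ with $G_u(s,s)=0$, $\partial_tG_u(t,s)|_{t=s}=1$; $R(t,s)=E(t,s)G_u(t,s)$. *)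

(* Defs.v *)
From Stdlib Require Import Reals.
From Coquelicot Require Import Coquelicot.
Open Scope R_scope.

Definition Efun (p : R -> R) (t s : R) : R := exp (- (1/2) * RInt p s t).

Definition qfun (p : R -> R) (t : R) : R := - (1/4) * (p t)^2 - (1/2) * Derive p t.

Definition is_Gu (p : R -> R) (w : R) (G : R -> R -> R) : Prop :=
  forall s : R,
    (forall t, ex_derive (fun tau => G tau s) t) /\
    (forall t, is_derive (fun tau => Derive (fun tau' => G tau' s) tau) t
                         (- (w ^ 2 + qfun p t) * G t s)) /\
    G s s = 0 /\
    Derive (fun tau => G tau s) s = 1.

Definition Rfun (p : R -> R) (G : R -> R -> R) (t s : R) : R := Efun p t s * G t s.

Definition K1 (p : R -> R) (w : R) (G : R -> R -> R) (t s : R) : R :=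
  w ^ 2 * Rfun p G t s - Derive (fun s' => Rfun p G t s') s.

Definition K2 (p : R -> R) (w : R) (G : R -> R -> R) (t s : R) : R :=
  w ^ 2 * Derive (fun t' => Rfun p G t' s) t
  - Derive (fun t' => Derive (fun s' => Rfun p G t' s') s) t.

(* Main.v *)
Require Import Defs.
From Stdlib Require Import Reals Lra Psatz Classical.
From Coquelicot Require Import Coquelicot.
Open Scope R_scope.

Lemma nonincr (f df : R -> R) a b : a <= b ->
  (forall x, is_derive f x (df x)) -> (forall x, a <= x <= b -> df x <= 0) -> f b <= f a.
Proof.
  intros hab hd hn.
  destruct (MVT_gen f a b df) as [c [hc e]].
  - intros x _; apply hd.
  - intros x _; apply continuity_pt_filterlim; apply (ex_derive_continuous (K:=R_AbsRing) (V:=R_NormedModule)); eexists; apply hd.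
  - rewrite Rmin_left in hc by lra; rewrite Rmax_right in hc by lra.
    specialize (hn c hc). nra.
Qed.

Lemma cont_of_diff (p : R -> R) : (forall t, ex_derive p t) -> forall t, continuous p t.
Proof. intros h t; apply (ex_derive_continuous (K:=R_AbsRing) (V:=R_NormedModule)), h. Qed.

Lemma cont_q (p : R -> R) : (forall t, ex_derive p t) -> (forall t, continuous (Derive p) t) ->
  forall t, continuous (qfun p) t.
Proof.
  intros hd hc t. unfold qfun.
  apply (continuous_minus (fun t => - (1/4) * p t ^ 2) (fun t => 1/2 * Derive p t)).
  - apply (continuous_mult (fun _ => - (1/4)) (fun t => p t ^ 2)).
    + apply continuous_const.
    + apply (continuous_ext (fun t => p t * (p t * 1))). intros; simpl; ring.
      apply (continuous_mult p (fun t => p t * 1)). apply cont_of_diff; auto.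
      apply (continuous_mult p (fun t => 1)). apply cont_of_diff; auto. apply continuous_const.
  - apply (continuous_mult (fun _ => 1/2) (Derive p)). apply continuous_const. auto.
Qed.

Definition PP (p : R -> R) (x : R) := RInt p 0 x.

Lemma RInt_PP (p : R -> R) : (forall t, continuous p t) -> forall s t, RInt p s t = PP p t - PP p s.
Proof.
  intros hc s t. unfold PP.
  assert (ex: forall a b, ex_RInt p a b) by (intros; apply (ex_RInt_continuous (V:=R_CompleteNormedModule)); auto).
  rewrite <- (RInt_Chasles p 0 s t) by auto. change (plus (RInt p 0 s) (RInt p s t)) with (RInt p 0 s + RInt p s t). unfold Rminus; rewrite Rplus_comm, <- Rplus_assoc, Rplus_opp_l, Rplus_0_l; reflexivity.
Qed.

Lemma PP_deriv (p : R -> R) : (forall t, continuous p t) -> forall x, is_derive (PP p) x (p x).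
Proof.
  intros hc x. apply (is_derive_RInt (V:=R_CompleteNormedModule) p (PP p) 0 x); auto.
  apply filter_forall. intros b. apply (RInt_correct (V:=R_CompleteNormedModule)), (ex_RInt_continuous (V:=R_CompleteNormedModule)); auto.
Qed.

Lemma Efun_PP (p : R -> R) : (forall t, continuous p t) -> forall t s, Efun p t s = exp (-(1/2) * (PP p t - PP p s)).
Proof. intros hc t s; unfold Efun; rewrite RInt_PP; auto. Qed.

Ltac fixD := repeat match goal with |- context [Derive (fun x => ?f x)] => change (Derive (fun x => f x)) with (Derive f) end.
Ltac ad := auto_derive; fixD.

Definition sol (p : R -> R) (w : R) (y : R -> R) :=
  (forall t, ex_derive y t) /\ (forall t, is_derive (Derive y) t (-(w^2 + qfun p t) * y t)).

Lemma Dlin (y1 y2 : R -> R) (a b t : R) : ex_derive y1 t -> ex_derive y2 t ->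
  is_derive (fun x => a * y1 x + b * y2 x) t (a * Derive y1 t + b * Derive y2 t).
Proof. intros h1 h2. ad. auto. ring. Qed.

Lemma sol_lin (p : R -> R) (w : R) (y1 y2 : R -> R) (a b : R) : sol p w y1 -> sol p w y2 -> sol p w (fun x => a * y1 x + b * y2 x).
Proof.
  intros [d1 s1] [d2 s2]. split.
  - intros t; eexists; apply Dlin; auto.
  - intros t.
    apply (is_derive_ext (fun x => a * Derive y1 x + b * Derive y2 x)).
    + intros x; symmetry; apply is_derive_unique, Dlin; auto.
    + replace (- (w ^ 2 + qfun p t) * (a * y1 t + b * y2 t)) with
        (a * (- (w ^ 2 + qfun p t) * y1 t) + b * (- (w ^ 2 + qfun p t) * y2 t)) by ring.
      assert (e1 := s1 t). assert (e2 := s2 t).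
      ad. split; [eexists; apply e1|split; [eexists; apply e2|auto]].
      rewrite (is_derive_unique _ _ _ e1), (is_derive_unique _ _ _ e2). ring.
Qed.

Lemma e_deriv (p : R -> R) (w : R) (y : R -> R) (x : R) : sol p w y ->
  is_derive (fun x => y x ^ 2 + Derive y x ^ 2) x
    (2 * y x * Derive y x + 2 * Derive y x * (-(w^2 + qfun p x) * y x)).
Proof.
  intros [d s]. assert (e1 := s x). ad.
  split; [auto|split; [eexists; apply e1|auto]].
  rewrite (is_derive_unique _ _ _ e1). ring.
Qed.

Lemma bnd_aux (A B c K : R) : Rabs c <= K -> Rabs (2*A*B*c) <= K * (A^2+B^2).
Proof.
  intros h. rewrite !Rabs_mult. rewrite (Rabs_right 2) by lra.
  assert (2 * Rabs A * Rabs B <= A^2 + B^2).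
  { assert (A^2 = Rabs A ^2) by (rewrite <- !Rsqr_pow2; apply Rsqr_abs).
    assert (B^2 = Rabs B ^2) by (rewrite <- !Rsqr_pow2; apply Rsqr_abs).
    rewrite H, H0. pose proof (pow2_ge_0 (Rabs A - Rabs B)). lra. }
  assert (0 <= Rabs A) by apply Rabs_pos. assert (0 <= Rabs B) by apply Rabs_pos.
  assert (0 <= Rabs c) by apply Rabs_pos.
  nra.
Qed.

Lemma uniq (p : R -> R) (w : R) (y : R -> R) (a : R) : (forall t, ex_derive p t) -> (forall t, continuous (Derive p) t) ->
  sol p w y -> y a = 0 -> Derive y a = 0 -> forall t, y t = 0.
Proof.
  intros hd hc hs ya dya t.
  set (e := fun x => y x ^ 2 + Derive y x ^ 2).
  set (de := fun x => 2 * y x * Derive y x + 2 * Derive y x * (-(w^2 + qfun p x) * y x)).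
  assert (hde : forall x, is_derive e x (de x)) by (intros; apply e_deriv; auto).
  assert (ea : e a = 0) by (unfold e; rewrite ya, dya; ring).
  assert (epos : forall x, 0 <= e x) by (intros; unfold e; nra).
  assert (cq : forall x, continuity_pt (fun x => Rabs (qfun p x)) x).
  { intros x; apply continuity_pt_filterlim.
    apply (continuous_comp (qfun p) Rabs). apply cont_q; auto. apply continuous_Rabs. }
  assert (bde : forall x K, Rabs (qfun p x) <= K -> Rabs (de x) <= (1 + w^2 + K) * e x).
  { intros x K hK. unfold de, e.
    replace (2 * y x * Derive y x + 2 * Derive y x * (- (w ^ 2 + qfun p x) * y x))
      with (2 * y x * Derive y x * (1 - w^2 - qfun p x)) by ring.
    apply bnd_aux. eapply Rle_trans. apply Rabs_triang. unfold Rminus.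
    rewrite Rabs_Ropp. eapply Rle_trans. apply Rplus_le_compat_r. apply Rabs_triang.
    rewrite Rabs_Ropp, Rabs_R1. rewrite Rabs_right by nra. lra. }
  assert (e t = 0).
  { destruct (Rle_or_lt a t) as [hat|hta].
    - destruct (continuity_ab_maj _ a t hat (fun c _ => cq c)) as [Mx [hMx _]].
      set (L := 1 + w^2 + Rabs (qfun p Mx)).
      assert (hg := nonincr (fun x => e x * exp (-L * (x - a)))
                      (fun x => (de x - L * e x) * exp (-L * (x - a))) a t hat).
      simpl in hg.
      assert (e t * exp (- L * (t - a)) <= e a * exp (- L * (a - a))).
      { apply hg.
        - intros x. assert (h := hde x). ad. eexists; apply h.
          rewrite (is_derive_unique _ _ _ h). unfold Rminus; ring.
        - intros x hx. assert (h := bde x _ (hMx x hx)). fold L in h.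
          assert (0 < exp (- L * (x - a))) by apply exp_pos.
          apply Rabs_le_between in h. nra. }
      rewrite ea in H. assert (0 < exp (- L * (t - a))) by apply exp_pos.
      assert (0 <= e t) by auto. nra.
    - destruct (continuity_ab_maj _ t a (Rlt_le _ _ hta) (fun c _ => cq c)) as [Mx [hMx _]].
      set (L := 1 + w^2 + Rabs (qfun p Mx)).
      assert (hg := nonincr (fun x => - (e x * exp (L * (x - a))))
                      (fun x => - ((de x + L * e x) * exp (L * (x - a)))) t a (Rlt_le _ _ hta)).
      simpl in hg.
      assert (- (e a * exp (L * (a - a))) <= - (e t * exp (L * (t - a)))).
      { apply hg.
        - intros x. assert (h := hde x). ad. eexists; apply h.
          rewrite (is_derive_unique _ _ _ h). unfold Rminus; ring.
        - intros x hx. assert (h := bde x _ (hMx x hx)). fold L in h.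
          assert (0 < exp (L * (x - a))) by apply exp_pos.
          apply Rabs_le_between in h. nra. }
      rewrite ea in H. assert (0 < exp (L * (t - a))) by apply exp_pos.
      assert (0 <= e t) by auto. nra. }
  unfold e in H. nra.
Qed.

Lemma int_bound (f : R -> R) : (forall t, continuous f t) -> (forall t, 0 <= f t) ->
  ex_RInt_gen f (at_point 0) (Rbar_locally p_infty) ->
  exists l, forall t, 0 <= t -> RInt f 0 t <= l.
Proof.
  intros hc hpos [l H].
  assert (H1 := H (fun y => Rabs (y - l) < 1)).
  destruct H1 as [Q Rr hQ hR hQR].
  - exists (mkposreal 1 Rlt_0_1). intros y Hy. apply Hy.
  - exists (l + 1). intros t ht. destruct hR as [M hM].
    set (T := Rmax t M + 1).
    assert (tT : t <= T) by (unfold T; assert (t <= Rmax t M) by apply Rmax_l; lra).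
    assert (MT : M < T) by (unfold T; assert (M <= Rmax t M) by apply Rmax_r; lra).
    destruct (hQR 0 T hQ (hM T MT)) as [y [hy hyl]]. simpl in hy.
    assert (ex : forall a b, ex_RInt f a b) by (intros; apply (ex_RInt_continuous (V:=R_CompleteNormedModule)); auto).
    assert (e1 : RInt f 0 T = y) by (apply is_RInt_unique; auto).
    assert (e2 : plus (RInt f 0 t) (RInt f t T) = RInt f 0 T) by (apply RInt_Chasles; auto).
    change (RInt f 0 t + RInt f t T = RInt f 0 T) in e2.
    assert (0 <= RInt f t T) by (apply RInt_ge_0; auto).
    apply Rabs_lt_between in hyl. lra.
Qed.

Lemma cont_sq (p : R -> R) : (forall t, ex_derive p t) -> forall t, continuous (fun x => p x ^ 2) t.
Proof.
  intros hd t.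
  apply (continuous_ext (fun t => p t * (p t * 1))). intros; simpl; ring.
  apply (continuous_mult p (fun t => p t * 1)). apply cont_of_diff; auto.
  apply (continuous_mult p (fun t => 1)). apply cont_of_diff; auto. apply continuous_const.
Qed.

Lemma p_decr (p : R -> R) : (forall t, ex_derive p t) -> (forall t, 0 <= t -> Derive p t < 0) ->
  forall t, 0 <= t -> p t <= p 0.
Proof.
  intros hd hn t ht. apply (nonincr p (Derive p)); auto.
  - intros x; apply Derive_correct; auto.
  - intros x hx; apply Rlt_le, hn; lra.
Qed.

Lemma bounded (p : R -> R) (w : R) (y : R -> R) : 0 < w ->
  (forall t, ex_derive p t) -> (forall t, continuous (Derive p) t) ->
  (forall t, 0 <= t -> 0 < p t) -> (forall t, 0 <= t -> Derive p t < 0) ->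
  ex_RInt_gen (fun t => (p t) ^ 2) (at_point 0) (Rbar_locally p_infty) ->
  sol p w y -> exists C, forall t, 0 <= t -> Rabs (y t) <= C /\ Rabs (Derive y t) <= C.
Proof.
  intros hw hd hc hpos hdec hsq hs.
  destruct (int_bound (fun t => p t ^ 2) (cont_sq p hd) (fun t => pow2_ge_0 _) hsq) as [l hl].
  set (F := fun t => / w * (/ 4 * PP (fun x => p x ^ 2) t - / 2 * p t)).
  set (dF := fun t => / w * (/ 4 * p t ^ 2 - / 2 * Derive p t)).
  assert (hF : forall t, is_derive F t (dF t)).
  { intros t. assert (h1 := PP_deriv (fun x => p x ^ 2) (cont_sq p hd) t).
    assert (h2 := Derive_correct p t (hd t)).
    unfold F, dF. revert h1. generalize (PP (fun x => p x ^ 2)). intros I h1.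
    ad. split; [eexists; apply h1|split; [auto|auto]].
    rewrite (is_derive_unique _ _ _ h1). field. lra. }
  set (e := fun x => w^2 * y x ^ 2 + Derive y x ^ 2).
  set (de := fun x => 2 * y x * Derive y x * (- qfun p x)).
  destruct hs as [hyd hyy].
  assert (hde : forall x, is_derive e x (de x)).
  { intros x. assert (h := hyy x). unfold e, de. ad.
    split; [auto|split; [eexists; apply h|auto]].
    rewrite (is_derive_unique _ _ _ h). ring. }
  assert (key : forall x, 0 <= x -> de x <= dF x * e x).
  { intros x hx. unfold de, dF, e.
    assert (hq : Rabs (qfun p x) <= / 4 * p x ^ 2 - / 2 * Derive p x).
    { unfold qfun. assert (0 < p x) by auto. assert (Derive p x < 0) by auto.
      apply Rabs_le. nra. }
    assert (hyw : 2 * w * Rabs (y x) * Rabs (Derive y x) <= w^2 * y x ^ 2 + Derive y x ^ 2).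
    { assert (y x ^2 = Rabs (y x) ^2) by (rewrite <- !Rsqr_pow2; apply Rsqr_abs).
      assert (Derive y x ^2 = Rabs (Derive y x) ^2) by (rewrite <- !Rsqr_pow2; apply Rsqr_abs).
      rewrite H, H0. pose proof (pow2_ge_0 (w * Rabs (y x) - Rabs (Derive y x))). nra. }
    assert (h1 : 2 * y x * Derive y x * - qfun p x <= 2 * Rabs (y x) * Rabs (Derive y x) * Rabs (qfun p x)).
    { eapply Rle_trans. apply Rle_abs. rewrite !Rabs_mult, Rabs_Ropp, (Rabs_right 2) by lra. lra. }
    assert (0 <= Rabs (qfun p x)) by apply Rabs_pos.
    assert (0 <= Rabs (y x)) by apply Rabs_pos.
    assert (0 <= Rabs (Derive y x)) by apply Rabs_pos.
    assert (w * (2 * y x * Derive y x * - qfun p x) <= (/ 4 * p x ^ 2 - / 2 * Derive p x) * (w ^ 2 * y x ^ 2 + Derive y x ^ 2)).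
    { eapply Rle_trans. apply Rmult_le_compat_l. lra. apply h1.
      assert (0 <= w ^ 2 * y x ^ 2 + Derive y x ^ 2) by nra. nra. }
    replace (/ w * (/ 4 * p x ^ 2 - / 2 * Derive p x) * (w ^ 2 * y x ^ 2 + Derive y x ^ 2))
      with (/ w * ((/ 4 * p x ^ 2 - / 2 * Derive p x) * (w ^ 2 * y x ^ 2 + Derive y x ^ 2))) by ring.
    apply (Rmult_le_reg_l w). lra. rewrite <- (Rmult_assoc w (/ w)), Rinv_r, Rmult_1_l by lra. lra. }
  set (K := / w * (/ 4 * l + / 2 * p 0)).
  set (C0 := e 0 * exp K).
  assert (he : forall t, 0 <= t -> e t <= C0).
  { intros t ht.
    assert (hh : e t * exp (- F t) <= e 0 * exp (- F 0)).
    { apply (nonincr (fun x => e x * exp (- F x)) (fun x => (de x - dF x * e x) * exp (- F x))); auto.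
      - intros x. assert (h1 := hde x). assert (h2 := hF x). ad.
        split; [eexists; apply h1|split; [eexists; apply h2|auto]].
        rewrite (is_derive_unique _ _ _ h1), (is_derive_unique _ _ _ h2). ring.
      - intros x hx. assert (h := key x (proj1 hx)). assert (0 < exp (- F x)) by apply exp_pos. nra. }
    assert (FF : F t - F 0 <= K).
    { unfold F, K, PP. rewrite RInt_point. assert (h := hl t ht). assert (0 < p t) by auto.
      change (@zero R_CompleteNormedModule) with 0.
      assert (0 < / w) by (apply Rinv_0_lt_compat; lra). nra. }
    assert (e t = e t * exp (- F t) * exp (F t)).
    { rewrite Rmult_assoc, <- exp_plus. replace (- F t + F t) with 0 by ring. rewrite exp_0; ring. }
    rewrite H. unfold C0.
    assert (0 <= e 0) by (unfold e; nra).
    assert (exp (F t) <= exp (F 0 + K)) by (destruct (Req_dec (F t) (F 0 + K)) as [E|E]; [rewrite E; lra | left; apply exp_increasing; lra]).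
    rewrite exp_plus in H1.
    assert (0 < exp (F t)) by apply exp_pos.
    assert (0 < exp (- F 0)) by apply exp_pos.
    assert (exp (- F 0) * exp (F 0) = 1) by (rewrite <- exp_plus; replace (- F 0 + F 0) with 0 by ring; apply exp_0).
    assert (0 <= e t * exp (- F t)) by (assert (0 < exp (- F t)) by apply exp_pos; unfold e in *; nra).
    assert (0 < exp K) by apply exp_pos.
    set (A := e t * exp (- F t)) in *.
    apply Rle_trans with (A * (exp (F 0) * exp K)). apply Rmult_le_compat_l; lra.
    apply Rle_trans with (e 0 * exp (- F 0) * (exp (F 0) * exp K)).
    apply Rmult_le_compat_r. nra. lra.
    replace (e 0 * exp (- F 0) * (exp (F 0) * exp K)) with (e 0 * (exp (- F 0) * exp (F 0)) * exp K) by ring.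
    rewrite H4. lra. }
  exists (1 + C0 / w ^ 2 + C0). intros t ht. specialize (he t ht). unfold e in he.
  assert (0 < w ^ 2) by nra.
  assert (0 <= C0) by (assert (0 <= e t) by (unfold e; nra); unfold e in *; nra).
  assert (y t ^ 2 <= C0 / w ^ 2).
  { apply (Rmult_le_reg_l (w^2)); auto. unfold Rdiv. rewrite <- Rmult_assoc, (Rmult_comm (w^2) C0), Rmult_assoc, Rinv_r, Rmult_1_r by lra. nra. }
  assert (0 <= C0 / w ^ 2) by (apply Rdiv_le_0_compat; lra).
  split.
  - assert (Rabs (y t) <= 1 + y t ^ 2).
    { destruct (Rle_or_lt (Rabs (y t)) 1). nra. assert (y t ^2 = Rabs (y t) ^2) by (rewrite <- !Rsqr_pow2; apply Rsqr_abs). nra. }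
    nra.
  - assert (Rabs (Derive y t) <= 1 + Derive y t ^ 2).
    { destruct (Rle_or_lt (Rabs (Derive y t)) 1). nra. assert (Derive y t ^2 = Rabs (Derive y t) ^2) by (rewrite <- !Rsqr_pow2; apply Rsqr_abs). nra. }
    nra.
Qed.

Lemma abs_mul_le x y X Y : Rabs x <= X -> Rabs y <= Y -> Rabs (x * y) <= X * Y.
Proof. intros. rewrite Rabs_mult. apply Rmult_le_compat; auto; apply Rabs_pos. Qed.
Lemma abs_add_le x y X Y : Rabs x <= X -> Rabs y <= Y -> Rabs (x + y) <= X + Y.
Proof. intros. eapply Rle_trans. apply Rabs_triang. lra. Qed.
Lemma abs_sub_le x y X Y : Rabs x <= X -> Rabs y <= Y -> Rabs (x - y) <= X + Y.
Proof. intros. unfold Rminus. eapply Rle_trans. apply Rabs_triang. rewrite Rabs_Ropp. lra. Qed.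
Lemma abs_opp_le x X : Rabs x <= X -> Rabs (- x) <= X.
Proof. intros. rewrite Rabs_Ropp. auto. Qed.
Lemma abs_refl x : Rabs x <= Rabs x.
Proof. apply Rle_refl. Qed.

Ltac bnd := repeat (first [ eassumption | apply abs_add_le | apply abs_sub_le | apply abs_mul_le | apply abs_opp_le | apply abs_refl ]).

Definition X1 (w Wi a1 a2 b1 b2 c1 c2 d1 d2 ps pt : R) :=
  w^2 * ((a1 * d1 - c1 * b1) * Wi) - (1/2 * ps * ((a1 * d1 - c1 * b1) * Wi) + (a2 * d1 - c1 * b2) * Wi).
Definition X2 (w Wi a1 a2 b1 b2 c1 c2 d1 d2 ps pt : R) :=
  w^2 * (- (1/2) * pt * ((a1 * d1 - c1 * b1) * Wi) + (a1 * d2 - c2 * b1) * Wi)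
  - (- (1/2) * pt * (1/2 * ps * ((a1 * d1 - c1 * b1) * Wi) + (a2 * d1 - c1 * b2) * Wi)
     + 1/2 * ps * ((a1 * d2 - c2 * b1) * Wi) + (a2 * d2 - c2 * b2) * Wi).

Lemma Xbound (w Wi B P : R) : exists M, 0 < M /\ forall a1 a2 b1 b2 c1 c2 d1 d2 ps pt,
  Rabs a1 <= B -> Rabs a2 <= B -> Rabs b1 <= B -> Rabs b2 <= B ->
  Rabs c1 <= B -> Rabs c2 <= B -> Rabs d1 <= B -> Rabs d2 <= B ->
  Rabs ps <= P -> Rabs pt <= P ->
  Rabs (X1 w Wi a1 a2 b1 b2 c1 c2 d1 d2 ps pt) <= M /\ Rabs (X2 w Wi a1 a2 b1 b2 c1 c2 d1 d2 ps pt) <= M.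
Proof.
  assert (h1 : exists M1, forall a1 a2 b1 b2 c1 c2 d1 d2 ps pt,
  Rabs a1 <= B -> Rabs a2 <= B -> Rabs b1 <= B -> Rabs b2 <= B ->
  Rabs c1 <= B -> Rabs c2 <= B -> Rabs d1 <= B -> Rabs d2 <= B ->
  Rabs ps <= P -> Rabs pt <= P -> Rabs (X1 w Wi a1 a2 b1 b2 c1 c2 d1 d2 ps pt) <= M1).
  { eexists. intros. unfold X1. bnd. }
  assert (h2 : exists M2, forall a1 a2 b1 b2 c1 c2 d1 d2 ps pt,
  Rabs a1 <= B -> Rabs a2 <= B -> Rabs b1 <= B -> Rabs b2 <= B ->
  Rabs c1 <= B -> Rabs c2 <= B -> Rabs d1 <= B -> Rabs d2 <= B ->
  Rabs ps <= P -> Rabs pt <= P -> Rabs (X2 w Wi a1 a2 b1 b2 c1 c2 d1 d2 ps pt) <= M2).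
  { eexists. intros. unfold X2. bnd. }
  destruct h1 as [M1 h1]; destruct h2 as [M2 h2].
  exists (Rabs M1 + Rabs M2 + 1). split.
  - pose proof (Rabs_pos M1); pose proof (Rabs_pos M2); lra.
  - intros. split.
    + eapply Rle_trans. eapply h1; eauto. pose proof (Rle_abs M1); pose proof (Rabs_pos M2); lra.
    + eapply Rle_trans. eapply h2; eauto. pose proof (Rle_abs M2); pose proof (Rabs_pos M1); lra.
Qed.

Lemma const_of_d0 (f : R -> R) : (forall x, is_derive f x 0) -> forall a b, f a = f b.
Proof.
  intros h a b.
  assert (forall a b, a <= b -> f a = f b).
  { intros x y hxy.
    assert (f y <= f x) by (apply (nonincr f (fun _ => 0)); auto; intros; lra).
    assert (- f y <= - f x).
    { apply (nonincr (fun z => - f z) (fun _ => 0)). auto.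
      - intros z. assert (hz := h z). ad. eexists; eauto. rewrite (is_derive_unique _ _ _ hz). ring.
      - intros; lra. }
    lra. }
  destruct (Rle_or_lt a b). auto. symmetry; apply H; lra.
Qed.

Theorem mainTheorem6 (w : R) (p : R -> R) (G : R -> R -> R)
  (hw : 0 < w)
  (hp_diff : forall t, ex_derive p t)
  (hp_C1 : forall t, continuous (Derive p) t)
  (hp_pos : forall t, 0 <= t -> 0 < p t)
  (hp_dec : forall t, 0 <= t -> Derive p t < 0)
  (hp_int : filterlim (fun T => RInt p 0 T) (Rbar_locally p_infty) (Rbar_locally p_infty))
  (hp_sq : ex_RInt_gen (fun t => (p t) ^ 2) (at_point 0) (Rbar_locally p_infty))
  (hG : is_Gu p w G) :
  exists M : R, 0 < M /\
    forall t s : R, 0 <= s -> s <= t ->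
      Rabs (K1 p w G t s) <= M * Efun p t s /\
      Rabs (K2 p w G t s) <= M * Efun p t s.
Proof.
  assert (hpc := cont_of_diff p hp_diff).
  assert (solG : forall s, sol p w (fun t => G t s)).
  { intros s; destruct (hG s) as [h1 [h2 _]]; split; auto. }
  set (u := fun t => G t 0).
  assert (su : sol p w u) by apply solG.
  assert (exc : exists c, G c 0 <> 0).
  { apply NNPP. intro hn. destruct (hG 0) as [_ [_ [_ hd1]]].
    assert (forall c, G c 0 = 0) by (intro c; apply NNPP; intro; apply hn; eauto).
    rewrite (Derive_ext _ (fun _ => 0)) in hd1 by auto. rewrite Derive_const in hd1. lra. }
  destruct exc as [c hc0].
  set (v := fun t => G t c).
  assert (sv : sol p w v) by apply solG.
  set (W := G c 0).
  destruct su as [du ddu]. destruct sv as [dv ddv].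
  assert (hWr : forall s, u s * Derive v s - Derive u s * v s = W).
  { intros s.
    assert (hd0 : forall x, is_derive (fun x => u x * Derive v x - Derive u x * v x) x 0).
    { intros x. assert (e1 := ddu x). assert (e2 := ddv x). ad.
      repeat split; auto; eexists; eauto.
      rewrite (is_derive_unique _ _ _ e1), (is_derive_unique _ _ _ e2). ring. }
    assert (hc := const_of_d0 _ hd0 s c). simpl in hc. rewrite hc.
    destruct (hG c) as [_ [_ [h3 h4]]]. unfold v. rewrite h3, h4. unfold u, W. ring. }
  assert (hGf : forall t s, G t s = (u s * v t - u t * v s) / W).
  { intros t s.
    set (H := fun x => (u s / W) * v x + (- (v s / W)) * u x).
    assert (sH : sol p w H) by (apply sol_lin; split; auto).
    set (z := fun x => 1 * (fun y => G y s) x + (-1) * H x).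
    assert (sz : sol p w z) by (apply sol_lin; auto).
    destruct (hG s) as [hd1 [_ [hss hds]]].
    assert (z0 : z s = 0) by (unfold z, H; simpl; rewrite hss; field; auto).
    assert (dH : Derive H s = (u s / W) * Derive v s + (- (v s / W)) * Derive u s)
      by (apply is_derive_unique, Dlin; auto).
    assert (dz0 : Derive z s = 0).
    { assert (hz' : Derive z s = 1 * Derive (fun y => G y s) s + -1 * Derive H s)
        by (apply is_derive_unique, (Dlin (fun y => G y s) H); auto; apply sH).
      rewrite hz', hds, dH. rewrite <- (hWr s). field. rewrite hWr; auto. }
    assert (hz := uniq p w z s hp_diff hp_C1 sz z0 dz0 t).
    unfold z, H in hz. simpl in hz. apply Rminus_diag_uniq.
    replace (G t s - (u s * v t - u t * v s) / W) with (1 * G t s + -1 * (u s / W * v t + - (v s / W) * u t)) by (field; auto).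
    exact hz. }
  assert (hWn : W <> 0) by auto.
  assert (hRf : forall t s, Rfun p G t s = exp (-(1/2) * (PP p t - PP p s)) * ((u s * v t - u t * v s) / W)).
  { intros; unfold Rfun; rewrite Efun_PP, hGf; auto. }
  assert (hEf : forall t s, Efun p t s = exp (-(1/2) * (PP p t - PP p s))) by (intros; apply Efun_PP; auto).
  assert (hP := PP_deriv p hpc).
  assert (hPD : forall x, Derive (PP p) x = p x) by (intros; apply is_derive_unique; auto).
  assert (DS : forall t s, Derive (fun s' => Rfun p G t s') s =
     exp (-(1/2) * (PP p t - PP p s)) * (1/2 * p s * ((u s * v t - u t * v s) / W) + (Derive u s * v t - u t * Derive v s) / W)).
  { intros t s. rewrite (Derive_ext _ (fun s' => exp (-(1/2) * (PP p t - PP p s')) * ((u s' * v t - u t * v s') / W))) by auto.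
    apply is_derive_unique. ad. repeat split; auto; eexists; eauto.
    rewrite ?hPD. unfold Rminus. field. auto. }
  assert (DT : forall t s, Derive (fun t' => Rfun p G t' s) t =
     exp (-(1/2) * (PP p t - PP p s)) * (- (1/2) * p t * ((u s * v t - u t * v s) / W) + (u s * Derive v t - Derive u t * v s) / W)).
  { intros t s. rewrite (Derive_ext _ (fun t' => exp (-(1/2) * (PP p t' - PP p s)) * ((u s * v t' - u t' * v s) / W))) by auto.
    apply is_derive_unique. ad. repeat split; auto; eexists; eauto.
    rewrite ?hPD. unfold Rminus. field. auto. }
  assert (DTS : forall t s, Derive (fun t' => Derive (fun s' => Rfun p G t' s') s) t =
     exp (-(1/2) * (PP p t - PP p s)) * (- (1/2) * p t * (1/2 * p s * ((u s * v t - u t * v s) / W) + (Derive u s * v t - u t * Derive v s) / W)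
       + 1/2 * p s * ((u s * Derive v t - Derive u t * v s) / W) + (Derive u s * Derive v t - Derive u t * Derive v s) / W)).
  { intros t s. rewrite (Derive_ext _ (fun t' => exp (-(1/2) * (PP p t' - PP p s)) * (1/2 * p s * ((u s * v t' - u t' * v s) / W) + (Derive u s * v t' - u t' * Derive v s) / W))) by auto.
    apply is_derive_unique. ad. repeat split; auto; eexists; eauto.
    rewrite ?hPD. unfold Rminus. field. auto. }
  destruct (bounded p w u hw hp_diff hp_C1 hp_pos hp_dec hp_sq (conj du ddu)) as [Cu hCu].
  destruct (bounded p w v hw hp_diff hp_C1 hp_pos hp_dec hp_sq (conj dv ddv)) as [Cv hCv].
  set (Bd := Rabs Cu + Rabs Cv).
  destruct (Xbound w (/ W) Bd (p 0)) as [M [hM hMb]].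
  exists M. split; auto. intros t s hs hst.
  assert (ht : 0 <= t) by lra.
  set (E0 := exp (-(1/2) * (PP p t - PP p s))).
  assert (hE0 : 0 < E0) by apply exp_pos.
  assert (k1 : K1 p w G t s = E0 * X1 w (/W) (u s) (Derive u s) (v s) (Derive v s) (u t) (Derive u t) (v t) (Derive v t) (p s) (p t)).
  { unfold K1. rewrite DS, hRf. unfold X1, E0. field. auto. }
  assert (k2 : K2 p w G t s = E0 * X2 w (/W) (u s) (Derive u s) (v s) (Derive v s) (u t) (Derive u t) (v t) (Derive v t) (p s) (p t)).
  { unfold K2. rewrite DT, DTS. unfold X2, E0. field. auto. }
  assert (bu : forall x, 0 <= x -> Rabs (u x) <= Bd /\ Rabs (Derive u x) <= Bd).
  { intros x hx. destruct (hCu x hx). pose proof (Rle_abs Cu). pose proof (Rabs_pos Cv). unfold Bd. lra. }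
  assert (bv : forall x, 0 <= x -> Rabs (v x) <= Bd /\ Rabs (Derive v x) <= Bd).
  { intros x hx. destruct (hCv x hx). pose proof (Rle_abs Cv). pose proof (Rabs_pos Cu). unfold Bd. lra. }
  assert (bp : forall x, 0 <= x -> Rabs (p x) <= p 0).
  { intros x hx. rewrite Rabs_right by (apply Rle_ge, Rlt_le; auto). apply p_decr; auto. }
  destruct (bu s hs), (bu t ht), (bv s hs), (bv t ht).
  destruct (hMb (u s) (Derive u s) (v s) (Derive v s) (u t) (Derive u t) (v t) (Derive v t) (p s) (p t)) as [b1 b2]; auto.
  rewrite hEf, k1, k2, !Rabs_mult, (Rabs_right E0) by lra. fold E0.
  split; rewrite (Rmult_comm M); apply Rmult_le_compat_l; lra.
Qed.
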